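(* Let $p\geq 5$ be an integer and let $(m_n)$ be the metallic numbers defined by $m_{-1}=0$, $m_0=1$, $m_{n+2}=(p-2)m_{n+1}-m_n$. Then every positive integer $n$ can be written as $$n=\sum_{i=0}^{k} a_i\,m_i$$ for some $k\geq 0$ and digits $a_i\in\{1,2,\dots,p-2\}$ for all $i\in\{0,\dots,k\}$.
   Context: $p\ge 5$ is a fixed integer. The metallic numbers are $m_{-1}=0$, $m_0=1$, $m_{n+2}=(p-2)m_{n+1}-m_n$ for $n\ge -1$ (so $m_1=p-2$). *)

(* Defs.v *)
From mathcomp Require Import all_boot all_order all_algebra.
Set Implicit Arguments. Unset Strict Implicit. Unset Printing Implicit Defensive.
Import Order.TTheory GRing.Theory Num.Theory.
Local Open Scope ring_scope.

(* Metallic numbers as integers: metallic p n = m_n for n >= 0, where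
   m_{-1} = 0, m_0 = 1, m_{n+2} = (p-2) m_{n+1} - m_n.
   Hence m_1 = p - 2 and m_{n+2} = (p-2) m_{n+1} - m_n for n >= 0. *)
Fixpoint metallic (p : nat) (n : nat) : int :=
  match n with
  | 0 => 1
  | 1 => (p%:Z - 2)
  | (n'.+1 as k).+1 => (p%:Z - 2) * metallic p k - metallic p n'
  end.

(* Main.v *)
Require Import Defs.
From mathcomp Require Import all_boot all_order all_algebra zify.
Import Order.TTheory GRing.Theory Num.Theory.
Set Implicit Arguments. Unset Strict Implicit.
Local Open Scope ring_scope.

Fixpoint mn (p : nat) (n : nat) : nat :=
  match n with
  | 0 => 1
  | 1 => p - 2
  | (n'.+1 as k).+1 => ((p - 2) * mn p k - mn p n')%N
  end.

Lemma mn_props p (hp : (5 <= p)%N) i :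
  [/\ metallic p i = (mn p i)%:Z, metallic p i.+1 = (mn p i.+1)%:Z,
     (1 <= mn p i)%N, (mn p i <= mn p i.+1)%N & (mn p i.+1 <= (p-2) * mn p i)%N].
Proof.
elim: i => [|i [e1 e2 h1 h2 h3]].
  split => //=; try lia.
have e3 : mn p i.+2 = ((p - 2) * mn p i.+1 - mn p i)%N by [].
split => //.
- change (metallic p i.+2) with ((p%:Z - 2) * metallic p i.+1 - metallic p i).
  rewrite e1 e2 e3. nia.
- lia.
- rewrite e3. nia.
- rewrite e3. nia.
Qed.

Definition S p k := (\sum_(0 <= i < k.+1) mn p i)%N.

Lemma S_rec p k : S p k.+1 = (S p k + mn p k.+1)%N.
Proof. by rewrite /S big_nat_recr. Qed.

Lemma key p (hp : (5 <= p)%N) k : (mn p k.+1 <= (p - 3) * S p k + 1)%N.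
Proof.
case: k => [|k]. rewrite /S big_nat1 /=. lia.
have [_ _ h1 h2 h3] := mn_props hp k.
have [_ _ g1 g2 g3] := mn_props hp k.+1.
have e3 : mn p k.+2 = ((p - 2) * mn p k.+1 - mn p k)%N by [].
have : (mn p k + mn p k.+1 <= S p k.+1)%N.
  rewrite /S big_nat_recr //= big_nat_recr //=. lia.
move=> hS. rewrite e3.
have -> : (p - 3 = (p - 2) - 1)%N by lia.
have := leq_mul (leqnn (p - 2 - 1)) hS.
move: h3 hp; generalize (S p k.+1) (mn p k) (mn p k.+1); move=> s a b.
have [r er] : exists r, (p - 2 = r.+1)%N by exists (p-3)%N; lia.
rewrite er subSS subn0 => h3' _ hh.
have : (r * (a + b) <= r * s)%N by [].
rewrite mulnDr mulSn in h3' *. rewrite mulSn. lia.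
Qed.

Lemma Sge p (hp : (5 <= p)%N) k : (k < S p k)%N.
Proof.
elim: k => [|k IH]. rewrite /S big_nat1. by have [] := mn_props hp 0.
rewrite S_rec. have [_ _ h1 _ _] := mn_props hp k.+1. lia.
Qed.

Lemma Lrep p (hp : (5 <= p)%N) k x : (x <= (p - 3) * S p k)%N ->
  exists b : nat -> nat, (forall i, (i <= k)%N -> (b i <= p - 3)%N) /\
    x = (\sum_(0 <= i < k.+1) b i * mn p i)%N.
Proof.
elim: k x => [|k IH] x hx.
  exists (fun _ => x); split; first by move=> i _; rewrite /S big_nat1 /= in hx; lia.
  by rewrite big_nat1 /= muln1.
set M := mn p k.+1.
have hM : (1 <= M)%N by have [_ _ h _ _] := mn_props hp k.+1.
have hk := key hp k.
have eS : S p k.+1 = (S p k + M)%N by rewrite S_rec.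
rewrite eS in hx.
have [c [hc1 hc2 hc3]] : exists c, [/\ (c <= p - 3)%N, (c * M <= x)%N & (x - c * M <= (p-3) * S p k)%N].
  have ed := divn_eq x M. have lm := ltn_pmod x hM.
  case: (leqP (p - 3) (x %/ M)) => hd.
  - exists (p - 3)%N; split => //. have := leq_mul hd (leqnn M). lia. nia.
  - exists (x %/ M)%N; split. lia. lia. lia.
have [b [hb eb]] := IH _ hc3.
exists (fun i => if i == k.+1 then c else b i); split.
  move=> i hi; case: eqP => // ?; apply: hb; lia.
rewrite big_nat_recr // eqxx.
rewrite (eq_big_nat _ _ (F2 := fun i => b i * mn p i)%N); last first.
  move=> i /andP [_ hi]. have -> : (i == k.+1) = false by apply/eqP; lia. by [].
rewrite -eb. rewrite /M in hc2 *. change (x = (x - c * mn p k.+1) + c * mn p k.+1)%N; rewrite subnK //.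
Qed.

Lemma Lmain p (hp : (5 <= p)%N) k n : (1 <= n <= (p - 2) * S p k)%N ->
  exists k' (a : nat -> nat), (forall i, (i <= k')%N -> (1 <= a i <= p - 2)%N) /\
    n = (\sum_(0 <= i < k'.+1) a i * mn p i)%N.
Proof.
elim: k n => [|k IH] n hn.
  exists 0%N, (fun _ => n); split; first by move=> i _; rewrite /S big_nat1 /= in hn; lia.
  by rewrite big_nat1 /= muln1.
case: (leqP n ((p - 2) * S p k)) => h. apply: IH. lia.
have hk := key hp k.
have eS : S p k.+1 = (S p k + mn p k.+1)%N by rewrite S_rec.
have [b [hb eb]] := @Lrep p hp k.+1 (n - S p k.+1) ltac:(nia).
exists k.+1, (fun i => (b i).+1); split.
  move=> i hi; have := hb i hi; lia.
have -> : (\sum_(0 <= i < k.+2) (b i).+1 * mn p i = \sum_(0 <= i < k.+2) b i * mn p i + S p k.+1)%N.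
  rewrite /S -big_split /=. apply: eq_bigr => i _. by rewrite mulSn addnC.
rewrite -eb. nia.
Qed.

Theorem theorem4 (p : nat) (hp : (5 <= p)%N) (n : nat) (hn : (0 < n)%N) :
  exists (k : nat) (a : nat -> nat),
    (forall i, (i <= k)%N -> (1 <= a i <= p - 2)%N) /\
    n%:Z = \sum_(0 <= i < k.+1) (a i)%:Z * metallic p i.
Proof.
have hS := Sge hp n.
have [k [a [ha e]]] := @Lmain p hp n n ltac:(nia).
exists k, a; split => //.
rewrite (eq_bigr (fun i => ((a i * mn p i)%N)%:Z)); last first.
  by move=> i _; have [-> _ _ _ _] := mn_props hp i.
by rewrite e (big_morph Posz PoszD (erefl _)).
Qed.
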